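(* Let $q$ be a prime power, let $n>1$ and $k\ge 1$ be integers with $\gcd(n,k)=1$, and let $f(x)$ be an irreducible polynomial of degree $n$ over $\mathbb{F}_q$. Let $\alpha,\beta\in\mathbb{F}_{q^k}$ with $\alpha\neq 0$, and set $g(x):=f(\alpha x+\beta)\in\mathbb{F}_{q^k}[x]$. Then the polynomial $$F(x)=\prod_{a=0}^{k-1} g^{(a)}(x),$$ which has degree $nk$ and coefficients in $\mathbb{F}_q$, is irreducible over $\mathbb{F}_q$ if and only if $\mathbb{F}_q(\alpha,\beta)=\mathbb{F}_{q^k}$.
   Context: For a polynomial $g(x)=\sum_{u=0}^{m} b_u x^u$ with coefficients in $\mathbb{F}_{q^k}$ and an integer $a\ge 0$, write $g^{(a)}(x)=\sum_{u=0}^{m} b_u^{q^a}x^u$. $\mathbb{F}_q(\alpha,\beta)$ denotes the smallest subfield of $\mathbb{F}_{q^k}$ containing $\mathbb{F}_q$, $\alpha$ and $\beta$. *)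

(* Defs.v *)
From HB Require Import structures.
From mathcomp Require Import all_boot all_order all_algebra all_field.
Set Implicit Arguments. Unset Strict Implicit. Unset Printing Implicit Defensive.
Import GRing.Theory.
Local Open Scope ring_scope.

(* g^(a): raise every coefficient of g to the power q^a, where q = #|F|. *)
Definition frob_poly (F : finFieldType) (L : fieldExtType F) (a : nat)
  (g : {poly L}) : {poly L} :=
  map_poly (fun c : L => c ^+ (#|F| ^ a)%N) g.

(* Main.v *)
Require Import Defs.
From HB Require Import structures.
From mathcomp Require Import all_boot all_order all_algebra all_field.
Set Implicit Arguments. Unset Strict Implicit. Unset Printing Implicit Defensive.
Import GRing.Theory.
Local Open Scope ring_scope.
Section Frob.
Variables (F : finFieldType) (K : fieldExtType F).
Local Notation q := #|F|.
Definition frob (m : nat) (x : K) := x ^+ (q ^ m).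
Lemma frob1_sub : zmod_morphism (frob 1).
Proof.
rewrite /frob [(_ ^ 1)%N]expn1 => x y.
have [p _ pcharFp] := finPcharP F.
rewrite (card_pprimeChar pcharFp).
have pcharK : p \in [pchar K] by rewrite (pchar_lalg K).
elim: (logn _ _) => [|n IHn]; first by rewrite !expr1.
rewrite expnSr !exprM {}IHn.
by rewrite -pFrobenius_autE rmorphB.
Qed.
Lemma frobS m x : frob m.+1 x = frob 1 (frob m x).
Proof. by rewrite /frob expnSr [(q ^ 1)%N]expn1 exprM. Qed.
Lemma frob0 x : frob 0 x = x. Proof. by rewrite /frob expr1. Qed.
Lemma frob_sub m : zmod_morphism (frob m).
Proof.
elim: m => [|m IH] x y; first by rewrite !frob0.
by rewrite [LHS]frobS IH frob1_sub -!frobS.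
Qed.
Lemma frob_mul m : monoid_morphism (frob m).
Proof. by rewrite /frob; split=> [|x y]; rewrite ?exprMn ?expr1n. Qed.
Time HB.instance Definition _ m := GRing.isZmodMorphism.Build _ _ (frob m) (frob_sub m).
Time HB.instance Definition _ m := GRing.isMonoidMorphism.Build _ _ (frob m) (frob_mul m).
Lemma frob_alg m (a : F) : frob m a%:A = a%:A.
Proof.
elim: m => [|m IH]; first by rewrite frob0.
by rewrite frobS IH /frob [(q ^ 1)%N]expn1 -in_algE -rmorphXn expf_card.
Qed.
Lemma frobD m1 m2 x : frob (m1 + m2) x = frob m1 (frob m2 x).
Proof. by rewrite /frob expnD mulnC exprM. Qed.
Lemma frobM m t x : frob m x = x -> frob (m * t) x = x.
Proof.
move=> fx; elim: t => [|t IH]; first by rewrite muln0 frob0.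
by rewrite mulnS frobD IH fx.
Qed.
Lemma frob_inj m : injective (frob m).
Proof. exact: fmorph_inj. Qed.
Lemma frob_gcd a b x : (0 < a)%N -> frob a x = x -> frob b x = x -> frob (gcdn a b) x = x.
Proof.
move=> a0 fa fb.
have [u _ /dvdnP[v Dv]] := Bezoutr b a0.
have: frob (v * a) x = x by rewrite mulnC frobM.
by rewrite -Dv frobD [(u * b)%N]mulnC frobM // gcdnC.
Qed.
Lemma Fermat_frob (V : {subfield K}) x : (x \in V) = (frob (\dim V) x == x).
Proof. exact: Fermat's_little_theorem. Qed.
Lemma mem1_frob x : (x \in 1%VS) = (frob 1 x == x).
Proof. by rewrite Fermat_frob dimv1. Qed.
Lemma dim_le_frob (V : {vspace K}) g : (0 < g)%N ->
  (forall y, y \in V -> frob g y = y) -> (\dim V <= g)%N.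
Proof.
move=> g0 fixV.
pose T := finvect_type K.
have cardV : #|(V : {vspace T})| = (q ^ \dim V)%N := @card_vspace F T _ V.
move: cardV; set N := (q ^ g)%N.
have q1 : (1 < q)%N := finRing_gt1 F.
have N1 : (1 < N)%N by have := ltn_exp2l 0 g q1; rewrite expn0 /N => ->.
pose P : {poly K} := 'X^N - 'X.
have szP : size P = N.+1 by rewrite size_polyDl ?size_polyXn // size_polyN size_polyX ltnS.
have nzP : P != 0 by rewrite -size_poly_eq0 szP.
have := max_poly_roots nzP (rs := (enum (mem (V : {vspace T}))) : seq K) _ (enum_uniq _).
rewrite szP ltnS => H cardV; rewrite cardE in cardV; move: H; rewrite cardV leq_exp2l //; apply.
apply/allP=> y Vy; have {}Vy : y \in V by move: Vy; rewrite (@mem_enum T (mem (V : {vspace T})) (y : T)).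
by rewrite /root !hornerE -[y ^+ N]/(frob g y) fixV ?subrr.
Qed.
Lemma frob_fix1 m y : y \in 1%VS -> frob m y = y.
Proof. by case/vlineP=> a ->; rewrite -[a *: 1]/(a%:A) frob_alg. Qed.

Lemma frob_fix_adjoin m (U : {subfield K}) x :
  (forall y, y \in U -> frob m y = y) -> frob m x = x ->
  forall y, y \in <<U; x>>%VS -> frob m y = y.
Proof.
move=> fU fx y /Fadjoin_polyP[p Up ->].
rewrite -horner_map /= fx map_poly_id // => c pc.
apply: fU; move/polyOverP: Up => Up.
by have [i _ <-] := (nthP 0 pc); apply: Up.
Qed.

Lemma dim_root_lt (Q : {poly F}) y : Q != 0 ->
  root (map_poly (in_alg K) Q) y -> (\dim <<1; y>> < size Q)%N.
Proof.
move=> nzQ rQ.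
have dv := minPoly_dvdp (alg_polyOver 1 Q) rQ.
have := dvdp_leq _ dv; rewrite map_poly_eq0 size_map_poly size_minPoly => /(_ nzQ).
by rewrite dim_Fadjoin dimv1 muln1.
Qed.

Lemma dim_root_irr (P : {poly F}) y : irreducible_poly P ->
  root (map_poly (in_alg K) P) y -> \dim <<1; y>> = (size P).-1.
Proof.
move=> [P1 irrP] rP.
have dv := minPoly_dvdp (alg_polyOver 1 P) rP.
have /polyOver1P[m Dm] := minPolyOver 1 y.
rewrite Dm dvdp_map in dv.
have szm : size m = (\dim <<1; y>>).+1.
  by rewrite -(size_map_poly (in_alg K)) -Dm size_minPoly dim_Fadjoin dimv1 muln1.
have : m %= P.
  apply: irrP dv; rewrite szm eqSS -lt0n.
  by rewrite dim_Fadjoin dimv1 muln1.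
by move/eqp_size; rewrite szm => <-.
Qed.
End Frob.
Section Main.
Variables (F : finFieldType) (L : fieldExtType F) (E : fieldExtType F).
Variable iota : {rmorphism L -> E}.
Hypothesis iota_alg : forall a : F, iota a%:A = a%:A.
Variables (n k : nat) (f : {poly F}) (alpha beta : L) (theta : E).
Hypotheses (n1 : (1 < n)%N) (k1 : (0 < k)%N) (cop : coprime n k)
  (dimL : \dim {:L} = k) (irrf : irreducible_poly f) (szf : size f = n.+1)
  (nza : alpha != 0) (rth : root (map_poly (in_alg E) f) theta).

Local Notation frE := (@frob F E).
Local Notation frL := (@frob F L).
Lemma frob_iota m c : frE m (iota c) = iota (frL m c).
Proof. by rewrite /frob rmorphXn. Qed.

Lemma fixL c : frL k c = c.
Proof. by apply/eqP; rewrite -dimL -Fermat_frob memvf. Qed.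

Lemma fixLi c : frE k (iota c) = iota c.
Proof. by rewrite frob_iota fixL. Qed.

Lemma dimth : \dim <<1; theta>> = n.
Proof. by rewrite (dim_root_irr irrf rth) szf. Qed.

Lemma fixth : frE n theta = theta.
Proof.
apply/eqP; rewrite -{1}dimth -[<<1; theta>>%VS]/(<<1; theta>>%AS : {vspace E}).
by rewrite -Fermat_frob memv_adjoin.
Qed.

Lemma th_not1 : frE 1 theta != theta.
Proof.
rewrite -mem1_frob -(adjoin_deg_eq1 1%AS).
have := dimth; rewrite dim_Fadjoin dimv1 muln1 => ->.
by rewrite gtn_eqF.
Qed.

Lemma fix_all (y : E) : frE 1 y = y -> forall m, frE m y = y.
Proof. by move=> fy m; rewrite -(mul1n m) frobM. Qed.

Lemma frob_comm (K : fieldExtType F) m1 m2 (y : K) : @frob F K m1 (@frob F K m2 y) = @frob F K m2 (@frob F K m1 y).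
Proof. by rewrite -!frobD addnC. Qed.

Lemma coprime_bez a b : (0 < a)%N -> coprime a b -> exists c d, (1 + c * b = d * a)%N.
Proof.
move=> a0 /eqP cab; have [c _ /dvdnP[d Dd]] := Bezoutl b a0.
by exists c, d; rewrite -cab.
Qed.

Hypothesis gen : <<<<1%VS; alpha>>; beta>>%VS = fullv.

Let a' := iota alpha.
Let b' := iota beta.
Let x := (theta - b') / a'.

Lemma nza' : a' != 0. Proof. by rewrite fmorph_eq0. Qed.

Lemma thetaE : theta = a' * x + b'.
Proof. by rewrite /x mulrC divfK ?nza' // subrK. Qed.

Lemma orbit e : frE e x = x -> (n * k %| e)%N.
Proof.
move=> fx.
set u := iota (frL e alpha / alpha).
set w := iota (frL e beta - frL e alpha / alpha * beta).
have ua : frE e a' = u * a'.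
  by rewrite /u /a' frob_iota -rmorphM divfK.
have ub : frE e b' = u * b' + w.
  by rewrite /w /u /b' frob_iota -rmorphM -rmorphD addrC subrK.
have uth : frE e theta = u * theta + w.
  rewrite {1}thetaE rmorphD rmorphM /= fx ua ub thetaE.
  by rewrite mulrDr mulrA addrA.
have fku : frE k u = u by rewrite fixLi.
have fkw : frE k w = w by rewrite fixLi.
have [c [d Dcd]] : exists c d, (1 + c * n = d * k)%N by apply: coprime_bez; rewrite // coprime_sym.
have th1 : frE (d * k) theta = frE 1 theta.
  by rewrite -Dcd frobD mulnC frobM // fixth.
have fdku y : frE k y = y -> frE (d * k) y = y by move=> fy; rewrite mulnC frobM.
have uth1 : frE e (frE 1 theta) = u * frE 1 theta + w.
  by rewrite -th1 frob_comm uth rmorphD rmorphM /= (fdku u) // (fdku w).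
pose delta := theta - frE 1 theta.
have nzd : delta != 0 by rewrite subr_eq0 eq_sym th_not1.
have ud : frE e delta = u * delta.
  by rewrite /delta rmorphB /= uth uth1 mulrBr opprD addrACA subrr addr0.
have fnd : frE n delta = delta.
  by rewrite /delta rmorphB /= frob_comm fixth.
have uE : u = frE e delta / delta by rewrite ud mulfK.
have fnu : frE n u = u.
  by rewrite uE fmorph_div /= frob_comm fnd.
have fnw : frE n w = w.
  have -> : w = frE e theta - u * theta by rewrite uth addrC addKr.
  by rewrite rmorphB rmorphM /= frob_comm fixth fnu.
have g1 : gcdn n k = 1%N by apply/eqP.
have f1u : frE 1 u = u by rewrite -g1 frob_gcd // ltnW.
have f1w : frE 1 w = w by rewrite -g1 frob_gcd // ltnW.
have fu m : frE m u = u := fix_all f1u m.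
have fw m : frE m w = w := fix_all f1w m.
have powa j : frE (e * j) a' = u ^+ j * a'.
  elim: j => [|j IH]; first by rewrite muln0 frob0 expr0 mul1r.
  by rewrite mulnS frobD IH rmorphM rmorphXn /= fu ua exprSr mulrA.
have powd j : frE (e * j) delta = u ^+ j * delta.
  elim: j => [|j IH]; first by rewrite muln0 frob0 expr0 mul1r.
  by rewrite mulnS frobD IH rmorphM rmorphXn /= fu ud exprSr mulrA.
have un : u ^+ n = 1.
  by apply: (mulIf nzd); rewrite mul1r -powd mulnC frobM.
have uk : u ^+ k = 1.
  by apply: (mulIf nza'); rewrite mul1r -powa mulnC frobM // fixLi.
have [c2 [d2 D2]] : exists c d, (1 + c * k = d * n)%N by apply: coprime_bez; rewrite // ltnW.
have u1 : u = 1.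
  have := congr1 (fun t => u ^+ t) D2.
  rewrite /= exprD expr1 [(c2 * k)%N]mulnC exprM uk expr1n mulr1.
  by rewrite [(d2 * n)%N]mulnC exprM un expr1n.
rewrite u1 in ua ub uth; rewrite mul1r in ua; rewrite mul1r in ub; rewrite mul1r in uth.
have powth j : frE (e * j) theta = theta + w *+ j.
  elim: j => [|j IH]; first by rewrite muln0 frob0 mulr0n addr0.
  by rewrite mulnS frobD IH rmorphD rmorphMn /= fw uth ?mul1r mulrS addrA.
have powb j : frE (e * j) b' = b' + w *+ j.
  elim: j => [|j IH]; first by rewrite muln0 frob0 mulr0n addr0.
  by rewrite mulnS frobD IH rmorphD rmorphMn /= fw ub ?mul1r mulrS addrA.
have wn : w *+ n = 0.
  by apply: (addrI theta); rewrite addr0 -powth mulnC frobM // fixth.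
have wk : w *+ k = 0.
  by apply: (addrI b'); rewrite addr0 -powb mulnC frobM // fixLi.
have w0 : w = 0.
  have := congr1 (fun t => w *+ t) D2.
  rewrite /= mulrnDr mulr1n [(c2 * k)%N]mulnC mulrnA wk mul0rn addr0.
  by rewrite [(d2 * n)%N]mulnC mulrnA wn mul0rn.
rewrite w0 in ub uth; rewrite addr0 in uth; rewrite addr0 in ub.
have ne : (n %| e)%N.
  have g0 : (0 < gcdn n e)%N by rewrite gcdn_gt0 ltnW.
  have fg : frE (gcdn n e) theta = theta.
    exact: (frob_gcd (ltnW n1) fixth uth).
  have := dim_le_frob g0 (frob_fix_adjoin (U := 1%AS) (frob_fix1 _) fg).
  rewrite dimth => le; apply/gcdn_idPl/eqP.
  by rewrite eqn_leq le dvdn_leq ?dvdn_gcdl // ltnW.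
have fal : frL e alpha = alpha by apply: (fmorph_inj iota); rewrite -frob_iota.
have fbe : frL e beta = beta by apply: (fmorph_inj iota); rewrite -frob_iota.
have fe z : frL e z = z.
  have fa1 := frob_fix_adjoin (U := 1%AS) (frob_fix1 _) fal.
  apply: (frob_fix_adjoin (U := <<1%AS; alpha>>%AS) fa1 fbe).
  by rewrite gen memvf.
have ke : (k %| e)%N.
  have g0 : (0 < gcdn k e)%N by rewrite gcdn_gt0 k1.
  have := @dim_le_frob F L fullv _ g0 (fun z _ => frob_gcd k1 (fixL z) (fe z)).
  rewrite dimL => le; apply/gcdn_idPl/eqP.
  by rewrite eqn_leq le dvdn_leq ?dvdn_gcdl.
by rewrite Gauss_dvd // ne ke.
Qed.

Lemma mapPE (P : {poly F}) :
  map_poly (in_alg E) P = map_poly iota (map_poly (in_alg L) P).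
Proof. by rewrite -map_poly_comp; apply: eq_map_poly => a /=; rewrite iota_alg. Qed.

Let g := map_poly (in_alg L) f \Po ('X * alpha%:P + beta%:P).

Lemma gx : (map_poly iota g).[x] = 0.
Proof.
rewrite /g map_comp_poly horner_comp -mapPE rmorphD rmorphM /= map_polyX !map_polyC /=.
rewrite !hornerE -/a' -/b' mulrC -thetaE.
by apply/eqP.
Qed.

Lemma frob_poly0 (h : {poly L}) : frob_poly 0 h = h.
Proof. by rewrite /frob_poly; apply: map_poly_id => c _; rewrite expn0 expr1. Qed.

Lemma FFx : (map_poly iota (\prod_(a < k) frob_poly a g)).[x] = 0.
Proof.
case: k k1 => // k' _.
by rewrite rmorph_prod horner_prod big_ord_recl /= frob_poly0 gx mul0r.
Qed.


Lemma irr_of_gen (P : {poly F}) :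
  map_poly (in_alg L) P = \prod_(a < k) frob_poly a g ->
  size (\prod_(a < k) frob_poly a g) = (n * k).+1 -> irreducible_poly P.
Proof.
move=> DP szFF.
have szP : size P = (n * k).+1 by rewrite -szFF -DP size_map_poly.
have nk0 : (0 < n * k)%N by rewrite muln_gt0 k1 ltnW.
have rP : root (map_poly (in_alg E) P) x by rewrite mapPE DP; apply/rootP; apply: FFx.
set D := \dim <<1; x>>.
have fD : frE D x = x.
  by have := Fermat_frob <<1; x>>%AS x; rewrite memv_adjoin => /esym/eqP.
have nkD : (n * k <= D)%N.
  apply: dvdn_leq; last exact: orbit.
  by rewrite /D dim_Fadjoin dimv1 muln1.
split; first by rewrite szP ltnS.
move=> Q szQ1 /dvdpP[R DPR].
have nzP : P != 0 by rewrite -size_poly_eq0 szP.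
have nzQ : Q != 0 by apply: contraNneq nzP => Q0; rewrite DPR Q0 mulr0.
have nzR : R != 0 by apply: contraNneq nzP => R0; rewrite DPR R0 mul0r.
move: rP; rewrite DPR rmorphM rootM => /orP[rR|rQ].
  have := dim_root_lt nzR rR; rewrite -/D => ltR.
  have : size P = (size R + size Q).-1 by rewrite DPR size_mul.
  rewrite szP => eq1.
  have szR : ((n * k).+1 <= size R)%N by apply: leq_ltn_trans ltR.
  have szQ0 : (0 < size Q)%N by rewrite size_poly_gt0.
  case/negP: szQ1; rewrite eqn_leq szQ0 andbT.
  rewrite -(leq_add2l (size R)) addn1.
  have : ((size R + size Q).-1 <= size R)%N by rewrite -eq1.
  by rewrite -subn1 leq_subLR add1n.
have := dim_root_lt nzQ rQ; rewrite -/D => ltQ.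
rewrite -dvdp_size_eqp; last by rewrite dvdp_mull.
rewrite -DPR szP eqn_leq (leq_ltn_trans nkD ltQ) andbT.
by rewrite -szP dvdp_leq // DPR dvdp_mull.
Qed.

Lemma gen_of_irr (P : {poly F}) :
  map_poly (in_alg L) P = \prod_(a < k) frob_poly a g ->
  size (\prod_(a < k) frob_poly a g) = (n * k).+1 -> irreducible_poly P ->
  <<<<1%VS; alpha>>; beta>>%VS = fullv.
Proof.
move=> DP szFF irrP.
have szP : size P = (n * k).+1 by rewrite -szFF -DP size_map_poly.
have rP : root (map_poly (in_alg E) P) x by rewrite mapPE DP; apply/rootP; apply: FFx.
pose S := <<<<1; alpha>>; beta>>%AS.
set d := \dim S.
have fS z : z \in S -> frL d z = z by move=> Sz; apply/eqP; rewrite -Fermat_frob.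
have fa : frL (d * n) alpha = alpha.
  by apply: frobM; apply: fS; apply: (subvP (subv_adjoin _ beta)); apply: memv_adjoin.
have fb : frL (d * n) beta = beta by apply: frobM; apply: fS; apply: memv_adjoin.
have fth : frE (d * n) theta = theta by rewrite mulnC frobM // fixth.
have fx : frE (d * n) x = x.
  by rewrite /x fmorph_div rmorphB /= /a' /b' !frob_iota fa fb fth.
have d0 : (0 < d)%N by rewrite /d adim_gt0.
have g0 : (0 < d * n)%N by rewrite muln_gt0 d0 ltnW.
have := dim_le_frob (V := <<1; x>>) g0 (frob_fix_adjoin (U := 1%AS) (frob_fix1 _) fx).
rewrite (dim_root_irr irrP rP) szP /= [(d * n)%N]mulnC.
Time rewrite leq_pmul2l; last by apply: ltnW.
move=> kd.
Time apply/eqP. Time rewrite eqEdim. Time rewrite subvf. Time rewrite dimL. Time done.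
Qed.
End Main.

Unset Implicit Arguments.
Lemma exists_ext (F : finFieldType) (L : fieldExtType F) (f : {poly F}) :
  (1 < size f)%N ->
  exists (E : fieldExtType F) (iota : {rmorphism L -> E}) (theta : E),
    (forall a : F, iota a%:A = a%:A) /\ root (map_poly (in_alg E) f) theta.
Proof.
move=> szf.
pose Lf := FinFieldExtType L.
pose fL : {poly Lf} := map_poly (in_alg L) f.
have nzfL : fL != 0 by rewrite map_poly_eq0 -size_poly_gt0 ltnW.
have [Lb [rs Drs _]] := FinSplittingFieldFor nzfL.
pose E := baseFieldType Lb.
pose iota : {rmorphism L -> E} := in_alg Lb.
have szp : size (map_poly (in_alg Lb) fL) = size f by rewrite !size_map_poly.
case: rs Drs => [|z rs] Drs.
  move/eqp_size: Drs; rewrite big_nil size_poly1 szp => sz1.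
  by rewrite sz1 in szf.
exists E, iota, z; split => // .
have : root (map_poly (in_alg Lb) fL) z.
  by rewrite (eqp_root Drs) root_prod_XsubC mem_head.
by rewrite /fL -map_poly_comp.
Qed.

Lemma size_frobp (F : finFieldType) (L : fieldExtType F) a (h : {poly L}) :
  size (frob_poly a h) = size h.
Proof. exact: (size_map_poly (@frob F L a)). Qed.

Lemma frobp_S (F : finFieldType) (L : fieldExtType F) a (h : {poly L}) :
  map_poly (@frob F L 1) (frob_poly a h) = frob_poly a.+1 h.
Proof.
rewrite /frob_poly -map_poly_comp; apply: eq_map_poly => c /=.
by rewrite -[c ^+ (#|F| ^ a)]/(frob a c) -frobS.
Qed.

Theorem theorem1 (F : finFieldType) (L : fieldExtType F) (n k : nat)
  (f : {poly F}) (alpha beta : L) :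
  (1 < n)%N -> (1 <= k)%N -> coprime n k -> \dim {:L} = k ->
  irreducible_poly f -> size f = n.+1 -> alpha != 0 ->
  let g := map_poly (in_alg L) f \Po ('X * alpha%:P + beta%:P) in
  let FF := \prod_(a < k) frob_poly a g in
  size FF = (n * k).+1 /\
  FF \is a polyOver (1%VS : {vspace L}) /\
  (forall P : {poly F}, map_poly (in_alg L) P = FF ->
     (irreducible_poly P <-> <<<<1%VS; alpha>>; beta>>%VS = fullv)).
Proof.
move=> n1 k1 cop dimL irrf szf nza g FF.
have szg : size g = n.+1.
  rewrite /g size_comp_poly2 ?size_map_poly //.
  by rewrite size_polyDl size_XmulC // (leq_ltn_trans (size_polyC_leq1 _)).
have szFF : size FF = (n * k).+1.
  rewrite /FF size_prod => [|i _]; last by rewrite -size_poly_gt0 size_frobp szg.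
  under eq_bigr do rewrite size_frobp szg.
  rewrite sum_nat_const card_ord.
  by rewrite mulnS -addnS addKn mulnC.
split => //.
have fkL (c : L) : frob k c = c by apply/eqP; rewrite -dimL -Fermat_frob memvf.
have FFfix : map_poly (@frob F L 1) FF = FF.
  rewrite /FF rmorph_prod.
  rewrite (eq_bigr (fun i : 'I_k => frob_poly i.+1 g)) => [|i _]; last exact: frobp_S.
  have [k' Dk] : exists k', k = k'.+1 by exists k.-1; rewrite prednK.
  have fkg : frob_poly k'.+1 g = frob_poly 0 g.
    rewrite /frob_poly -Dk; apply: eq_map_poly => c; rewrite expn0 expr1.
    exact: fkL.
  rewrite Dk big_ord_recr big_ord_recl /= fkg mulrC.
  by congr (_ * _); apply: eq_bigr => i _; rewrite /bump leq0n add1n.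
split.
  apply/polyOverP => i; rewrite mem1_frob -{2}FFfix coef_map.
  by [].
move=> P DP.
have szf1 : (1 < size f)%N by rewrite szf ltnW.
have [E [iota [theta [iota_alg rth]]]] := @exists_ext F L f szf1.
split => [irrP | gen].
  exact: (gen_of_irr (n:=n) (k:=k) (f:=f) (alpha:=alpha) (beta:=beta) (theta:=theta) iota_alg n1 k1 dimL irrf szf nza rth DP szFF irrP).
exact: (irr_of_gen (n:=n) (k:=k) (f:=f) (alpha:=alpha) (beta:=beta) (theta:=theta) iota_alg n1 k1 cop dimL irrf szf nza rth gen DP szFF).
Qed.
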